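(* Let $a,b$ be integers with $0<b<a$, let $S=\langle a,a+1,\ldots,a+b\rangle$ with conductor $c$, and let $m\ge 2c$. If $M$ is an $(S,m,r)$-amenable set, then $M-1=\{x-1\mid x\in M\}$ is an $(S,m-1,r)$-amenable set.
   Context: For $x\in S$, $\mathrm D(x)=\{\alpha\in S\mid x-\alpha\in S\}$. The conductor $c$ is the least element of $S$ with $c+n\in S$ for all $n\in\mathbb N$. For $m\ge 2c-1$, a set $M=\{m_1<\cdots<m_r\}\subseteq S$ with $m=m_1$ is $(S,m,r)$-amenable if $\mathrm D(m_i)\cap[m,\infty)\subseteq M$ for all $i$. *)

(* Defs.v *)
From mathcomp Require Import all_boot.
Set Implicit Arguments. Unset Strict Implicit. Unset Printing Implicit Defensive.

Inductive interval_sg (a b : nat) : nat -> Prop :=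
| isg0 : interval_sg a b 0
| isgS (x g : nat) : a <= g <= a + b -> interval_sg a b x -> interval_sg a b (x + g).

Definition is_conductor (S : nat -> Prop) (c : nat) : Prop :=
  [/\ S c, (forall n, S (c + n)) &
      (forall c', S c' -> (forall n, S (c' + n)) -> c <= c')].

(* D(x) = { alpha in S | x - alpha in S } (differences taken in Z, so alpha <= x). *)
Definition Dset (S : nat -> Prop) (x alpha : nat) : Prop :=
  [/\ S alpha, alpha <= x & S (x - alpha)].

(* M = {m_1 < ... < m_r} subset of S with m = m_1 (and m >= 2c - 1, c the
   conductor of S) is (S,m,r)-amenable if D(m_i) cap [m, oo) is contained in M. *)
Definition amenable (S : nat -> Prop) (m r : nat) (M : seq nat) : Prop :=
  (forall c, is_conductor S c -> 2 * c <= m + 1) /\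
  [/\ sorted ltn M, size M = r, ohead M = Some m,
      (forall x, x \in M -> S x) &
      (forall x alpha, x \in M -> Dset S x alpha -> m <= alpha -> alpha \in M)].

(* Main.v *)
Require Import Defs.
From mathcomp Require Import all_boot.
From mathcomp Require Import zify.

Lemma isg_small a b x : 1 < a -> interval_sg a b x -> x = 0 \/ a <= x.
Proof. move=> ha; elim=> [|y g /andP[h1 h2] _ [->|IH]]; [by left| |]; right; lia. Qed.

Lemma path_pred (m : nat) (t : seq nat) : 1 <= m -> path ltn m t ->
  path ltn (m - 1) [seq x - 1 | x <- t].
Proof.
elim: t m => [//|y t IH] m hm /= /andP[hy hp].
apply/andP; split; first lia.
apply: IH => //; lia.
Qed.

Theorem lemma4p21 (a b c m r : nat) (M : seq nat) :
  0 < b -> b < a ->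
  is_conductor (interval_sg a b) c ->
  2 * c <= m ->
  amenable (interval_sg a b) m r M ->
  amenable (interval_sg a b) (m - 1) r [seq x - 1 | x <- M].
Proof.
move=> hb hba hc hcm [_ [hs hsz hhd hS hD]].
have [hc1 hc2 hc3] := hc.
have c1 : 1 <= c.
  case: (posnP c) => [c0|//].
  have h1 := hc2 1; rewrite c0 add0n in h1.
  have := @isg_small a b 1 (ltac:(lia)) h1. lia.
have inS : forall y, c <= y -> interval_sg a b y.
  by move=> y hy; rewrite -(subnKC hy); apply: hc2.
case: M hs hsz hhd hS hD => [//|m0 t] hs hsz [hm] hS hD; subst m0.
have ge : forall x, x \in m :: t -> m <= x.
  move=> x; rewrite inE => /orP[/eqP->//|hx].
  have := order_path_min (@ltn_trans) hs.
  by move/allP => /(_ x hx) /ltnW.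
split.
  move=> c' hc'.
  have e : c' = c.
    have [h1 h2 h3] := hc'. apply/eqP; rewrite eqn_leq h3 //=; exact: hc3.
  rewrite e; lia.
split => //.
- by apply: path_pred; [lia|].
- by rewrite size_map.
- move=> y /mapP [x hx ->]; apply: inS; have := ge x hx; lia.
- move=> y alpha /mapP [x hx ->] [ha hle hd] hm.
  apply/mapP; exists alpha.+1; last by rewrite subn1.
  apply: (hD x) => //; last lia.
  split.
  + apply: inS; lia.
  + have := ge x hx; lia.
  + by have -> : x - alpha.+1 = x - 1 - alpha by lia.
Qed.
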